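(* (The push-forward formula for a product.) For all $f,g\in S$ and $u\in W$, the following identity holds in $Z$: \[ \pi\bullet\big(c(f)\cdot c(g)\big)=\sum_{w,v\in W}Y_{I_w}(f)\cdot u\big(Y_{I_v}(g)\big)\cdot\Big(\pi\bullet\big(\zeta^\vee_{I_w}\cdot\zeta(u)^\vee_{I_v}\big)\Big). \]
   Context: Setting: $\Phi$ a finite real root system (simple roots $\Pi$, positive/negative roots $\Phi_\pm$, Coxeter group $W$), $\mathcal O$ its coefficient ring, $\Lambda$ a free $\mathcal O$-module between root and weight lattices; $F$ a one-dimensional commutative formal group law over a commutative ring $R$; $S$ the formal group ring ($R[[x_\lambda]]_{\lambda\in\Lambda}$ modulo the closure of $x_0=0$, $x_{\lambda+\mu}=F(x_\lambda,x_\mu)$; no completion if $F$ polynomial; non-crystallographic case: $F$ additive, $R=\mathcal O$, $S=\mathrm{Sym}_{\mathcal O}\Lambda$), $W$ acting by $w(x_\lambda)=x_{w(\lambda)}$. Assume all $x_\alpha$ regular and $x_\alpha\mid x_{\alpha'}f\Rightarrow x_\alpha\mid f$ for distinct positive $\alpha,\alpha'$. $Q=S[1/x_\alpha]$; $Q_W$ twisted group algebra (basis $\delta_w$, $\delta_wq=w(q)\delta_w$) acting on $Q$ by $q\delta_w(f)=qw(f)$; $Y_\alpha=\frac1{x_{-\alpha}}+\frac1{x_\alpha}\delta_{s_\alpha}$ (so $Y_\alpha(f)=\frac f{x_{-\alpha}}+\frac{s_\alpha f}{x_\alpha}$), $Y_i=Y_{\alpha_i}$; fixed reduced words $I_w$,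 $Y_{I_w}$ the product, $I_w^{-1}$ reversed. $\mathbb D\subset Q_W$ generated by $S$ and the $Y_i$, free over $S$ on $\{Y_{I_w}\}$. $Z=\{(z_v)_v\in\bigoplus_{v\in W}S:z_{s_\alpha w}-z_w\in x_\alpha S\}$ (coordinatewise product), identified with $\mathrm{Hom}_S(\mathbb D,S)$ via $\phi\mapsto(\phi(\delta_v))_v$; Hecke action $q\delta_w\bullet(z_v)=(v(q)z_{vw})$, Weyl action $q\delta_w\odot(z_v)=(qw(z_{w^{-1}v}))$; $c(f)=(v(f))_v$. $x_\Pi=\prod_{\alpha\in\Phi_-}x_\alpha$; $\pi=\sum_w\frac1{w(x_\Pi)}\delta_w$ acting on $Z$ by $\bullet$. $\zeta^\vee_{I_w}\in Z$ corresponds to the functional on $\mathbb D$ with $Y_{I_u}\mapsto\delta^{Kr}_{w,u}$; $\zeta(u)^\vee_{I_w}=\delta_u\odot\zeta^\vee_{I_w}$. *)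

(* Defs.v *)
From HB Require Import structures.
From mathcomp Require Import all_boot all_order all_algebra.
From mathcomp Require Import boolp reals.
Set Implicit Arguments. Unset Strict Implicit. Unset Printing Implicit Defensive.
Import Order.TTheory GRing.Theory Num.Theory.
Local Open Scope ring_scope.

Section RootSystem.
Variables (R : realType) (m : nat).
Local Notation vec := 'cV[R]_m.
Local Notation mat := 'M[R]_m.

Definition dotv (a b : vec) : R := (a^T *m b) 0 0.

Definition refl (a : vec) : mat := 1%:M - (2 / dotv a a) *: (a *m a^T).

(* finite (real, possibly non-crystallographic) reduced root system *)
Definition is_root_system (Phi : seq vec) : Prop :=
  [/\ uniq Phi, 0 \notin Phi,
      forall a, a \in Phi -> forall c : R, (c *: a \in Phi) = (c == 1) || (c == -1)
    & forall a b, a \in Phi -> b \in Phi -> refl a *m b \in Phi].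

Definition comb (Pi : seq vec) (c : nat -> R) : vec := \sum_(i < size Pi) c i *: Pi`_i.

Definition pos_root (Phi Pi : seq vec) (a : vec) : Prop :=
  a \in Phi /\ exists c : nat -> R, (forall i, 0 <= c i) /\ a = comb Pi c.
Definition neg_root (Phi Pi : seq vec) (a : vec) : Prop :=
  a \in Phi /\ exists c : nat -> R, (forall i, c i <= 0) /\ a = comb Pi c.

Definition Pi_mx (Pi : seq vec) : 'M[R]_(size Pi, m) := \matrix_(i < size Pi, j < m) Pi`_i j 0.

Definition is_simple_system (Phi Pi : seq vec) : Prop :=
  [/\ {subset Pi <= Phi}, row_free (Pi_mx Pi)
    & forall a, a \in Phi -> pos_root Phi Pi a \/ neg_root Phi Pi a].

Definition wprod (s : seq vec) : mat := foldr (fun a M => refl a *m M) 1%:M s.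

Definition enumW (Phi : seq vec) (Wl : seq mat) : Prop :=
  uniq Wl /\ forall w, w \in Wl <-> exists s, {subset s <= Phi} /\ wprod s = w.

Definition reduced_word (Pi : seq vec) (s : seq vec) (w : mat) : Prop :=
  [/\ {subset s <= Pi}, wprod s = w
    & forall s', {subset s' <= Pi} -> wprod s' = w -> (size s <= size s')%N].

Definition is_W_action (Wl : seq mat) (T : pzRingType) (act : mat -> T -> T) : Prop :=
  [/\ forall w, w \in Wl -> forall a b, act w (a + b) = act w a + act w b,
      forall w, w \in Wl -> forall a b, act w (a * b) = act w a * act w b,
      forall w, w \in Wl -> act w 1 = 1,
      forall a, act 1%:M a = a
    & forall v w, v \in Wl -> w \in Wl -> forall a, act (v *m w) a = act v (act w a)].

Section Operators.
Variables (Q : comUnitRingType) (actQ : mat -> Q -> Q) (xq : vec -> Q) (Wl : seq mat).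

Definition Yop (a : vec) (q : Q) : Q := q / xq (- a) + actQ (refl a) q / xq a.
Definition YI (s : seq vec) (q : Q) : Q := foldr Yop q s.

(* elements of Q_W as coefficient functions W -> Q (p = sum_w p(w) delta_w) *)
Definition qw_delta (a : mat) : mat -> Q := fun b => (b == a)%:R.
Definition qw_mul (p q : mat -> Q) : mat -> Q :=
  fun c => \sum_(a <- Wl) \sum_(b <- Wl | a *m b == c) p a * actQ a (q b).
Definition qw_Y (a : vec) : mat -> Q :=
  fun b => (b == 1%:M)%:R / xq (- a) + (b == refl a)%:R / xq a.
Definition qw_YI (s : seq vec) : mat -> Q :=
  foldr (fun a p => qw_mul (qw_Y a) p) (qw_delta 1%:M) s.

(* elements of Z as coordinate functions (z_v)_v *)
Definition cZ (q : Q) : mat -> Q := fun v => actQ v q.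
Definition zmul (z1 z2 : mat -> Q) : mat -> Q := fun v => z1 v * z2 v.
Definition zscale (q : Q) (z : mat -> Q) : mat -> Q := fun v => q * z v.

Definition xPi (Phi Pi : seq vec) : Q := \prod_(a <- Phi | `[< neg_root Phi Pi a >]) xq a.

(* pi = sum_w 1/w(x_Pi) delta_w acting by the Hecke action:
   (q delta_w . z)_v = v(q) z_{vw} *)
Definition pi_act (xP : Q) (z : mat -> Q) : mat -> Q :=
  fun v => \sum_(w <- Wl) actQ v (actQ w xP)^-1 * z (v *m w).

(* Weyl action of delta_u : (delta_u (.) z)_v = u(z_{u^-1 v}) *)
Definition odot (u : mat) (z : mat -> Q) : mat -> Q := fun v => actQ u (z (invmx u *m v)).

(* matrix of Y_{I_u} = sum_v B_{u,v} delta_v, indexed by positions in Wl *)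
Definition Bmx (I : mat -> seq vec) : 'M[Q]_(size Wl) :=
  \matrix_(i < size Wl, k < size Wl) qw_YI (I (Wl`_i)) (Wl`_k).

(* zeta^vee_{I_w}: the functional on D with Y_{I_u} |-> delta_{w,u},
   i.e. (zeta_w)_v = phi(delta_v), so that sum_v B_{u,v} (zeta_w)_v = delta_{w,u} *)
Definition zeta (I : mat -> seq vec) (w : mat) : mat -> Q :=
  fun v => \sum_(i < size Wl) \sum_(k < size Wl | (Wl`_k == v) && (Wl`_i == w))
             invmx (Bmx I) k i.

End Operators.
End RootSystem.

(* Main.v *)
Require Import Defs.
From HB Require Import structures.
From mathcomp Require Import all_boot all_order all_algebra.
From mathcomp Require Import boolp reals ring.
From mathcomp Require Import fingroup perm.
Set Implicit Arguments. Unset Strict Implicit. Unset Printing Implicit Defensive.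
Import Order.TTheory GRing.Theory Num.Theory.
Local Open Scope ring_scope.

Section Mat.
Variables (R : realType) (m : nat).
Implicit Types (a : 'cV[R]_m).

Lemma dotv_neq0 a : a != 0 -> dotv a a != 0.
Proof.
move=> a0; apply: contra a0 => /eqP.
rewrite /dotv mxE => /eqP; rewrite psumr_eq0; last by move=> i _; rewrite mxE -expr2 sqr_ge0.
move=> /allP H; apply/eqP/matrixP => i k; rewrite ord1 mxE.
have := H i (mem_index_enum _); rewrite mxE mulf_eq0 orbb => /eqP //.
Qed.

Lemma reflK a : a != 0 -> refl a *m refl a = 1%:M.
Proof.
move=> /dotv_neq0 d0; rewrite /refl.
set d := dotv a a; set c := 2 / d.
have PP : (a *m a^T) *m (a *m a^T) = d *: (a *m a^T).
  rewrite mulmxA -(mulmxA a) [a^T *m a]mx11_scalar -/(dotv a a) -/d.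
  by rewrite mul_mx_scalar scalemxAl.
rewrite mulmxBl mul1mx mulmxBr mulmx1 -scalemxAl -scalemxAr.
rewrite PP !scalerA.
have -> : c * c * d = c + c by rewrite -mulrA /c divfK // mulr_natr mulr2n.
by rewrite scalerDl opprB addrK subrK.
Qed.

Lemma wprod_cat (s1 s2 : seq 'cV[R]_m) : wprod (s1 ++ s2) = wprod s1 *m wprod s2.
Proof. by elim: s1 => [|a s IH] /=; rewrite ?mul1mx // IH mulmxA. Qed.

Lemma wprod_rev_l (s : seq 'cV[R]_m) : 0 \notin s -> wprod (rev s) *m wprod s = 1%:M.
Proof.
elim: s => [|a s IH] /=; first by rewrite mul1mx.
rewrite inE negb_or eq_sym => /andP[a0 s0].
rewrite rev_cons -cats1 wprod_cat /= mulmx1 -mulmxA (mulmxA (refl a)) reflK //.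
by rewrite mul1mx IH.
Qed.
End Mat.

Section Main.
Variables (R : realType) (m : nat) (Phi Pi : seq 'cV[R]_m) (Wl : seq 'M[R]_m)
  (I : 'M[R]_m -> seq 'cV[R]_m) (Q : comUnitRingType) (actQ : 'M[R]_m -> Q -> Q)
  (xq : 'cV[R]_m -> Q).
Hypothesis H0 : 0 \notin Phi.
Hypothesis HPi : {subset Pi <= Phi}.
Hypothesis HWu : uniq Wl.
Hypothesis HW : forall w, w \in Wl <-> exists s, {subset s <= Phi} /\ wprod s = w.
Hypothesis HI : forall w, w \in Wl -> reduced_word Pi (I w) w.
Hypothesis Hact : is_W_action Wl actQ.
Hypothesis Hx : forall a, a \in Phi -> xq a \is a GRing.unit.

Lemma wprod_in s : {subset s <= Phi} -> wprod s \in Wl.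
Proof. by move=> sP; apply/HW; exists s. Qed.

Lemma one_in : 1%:M \in Wl.
Proof. by apply: (@wprod_in [::]). Qed.

Lemma refl_in a : a \in Phi -> refl a \in Wl.
Proof.
move=> aP; have := @wprod_in [:: a]; rewrite /= mulmx1; apply.
by move=> b; rewrite inE => /eqP ->.
Qed.

Lemma mul_in v w : v \in Wl -> w \in Wl -> v *m w \in Wl.
Proof.
move=> /HW[s [sP <-]] /HW[t [tP <-]]; rewrite -wprod_cat; apply: wprod_in.
by move=> b; rewrite mem_cat => /orP[/sP|/tP].
Qed.

Lemma inv_in u : u \in Wl -> u \in unitmx /\ invmx u \in Wl.
Proof.
move=> /HW[s [sP <-]].
have s0 : 0 \notin s by apply: contra H0 => /sP.
have E := wprod_rev_l s0.
have [_ U] := mulmx1_unit E.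
split => //.
have -> : invmx (wprod s) = wprod (rev s).
  by rewrite -[LHS]mulmx1 -(mulmx1C E) mulmxA mulVmx ?mul1mx.
by apply: wprod_in => b; rewrite mem_rev => /sP.
Qed.

Lemma actD w : w \in Wl -> forall a b, actQ w (a + b) = actQ w a + actQ w b.
Proof. by case: Hact => H _ _ _ _; apply: H. Qed.
Lemma actM w : w \in Wl -> forall a b, actQ w (a * b) = actQ w a * actQ w b.
Proof. by case: Hact => _ H _ _ _; apply: H. Qed.
Lemma act1 w : w \in Wl -> actQ w 1 = 1.
Proof. by case: Hact => _ _ H _ _; apply: H. Qed.
Lemma act_id a : actQ 1%:M a = a.
Proof. by case: Hact => _ _ _ H _; apply: H. Qed.
Lemma act_comp v w : v \in Wl -> w \in Wl -> forall a, actQ (v *m w) a = actQ v (actQ w a).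
Proof. by case: Hact => _ _ _ _ H; apply: H. Qed.

Lemma act0 w : w \in Wl -> actQ w 0 = 0.
Proof. by move=> wW; apply: (@addrI _ (actQ w 0)); rewrite -actD // !addr0. Qed.

Lemma act_sum w (T : Type) (r : seq T) (P : pred T) (F : T -> Q) : w \in Wl ->
  actQ w (\sum_(i <- r | P i) F i) = \sum_(i <- r | P i) actQ w (F i).
Proof.
move=> wW; elim: r => [|a r IH]; first by rewrite !big_nil act0.
by rewrite !big_cons; case: (P a) => //; rewrite actD // IH.
Qed.

Lemma act_unit w q : w \in Wl -> q \is a GRing.unit -> actQ w q \is a GRing.unit.
Proof.
move=> wW qU; apply/unitrP; exists (actQ w q^-1).
by rewrite -!actM // mulVr // mulrV // act1.
Qed.

Definition eval (p : 'M[R]_m -> Q) (q : Q) : Q := \sum_(v <- Wl) p v * actQ v q.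

Lemma sum_pred1 (F : 'M[R]_m -> Q) c : c \in Wl -> \sum_(v <- Wl | v == c) F v = F c.
Proof. by move=> cW; rewrite -big_filter filter_pred1_uniq // big_seq1. Qed.

Lemma sum_pred1' (F : 'M[R]_m -> Q) c : c \in Wl -> \sum_(v <- Wl | c == v) F v = F c.
Proof. by move=> cW; rewrite -(sum_pred1 F cW); apply: eq_bigl => v; rewrite eq_sym. Qed.

Lemma sum_delta (F : 'M[R]_m -> Q) c : c \in Wl -> \sum_(v <- Wl) (v == c)%:R * F v = F c.
Proof.
move=> cW; rewrite -(sum_pred1 F cW) [RHS]big_mkcond; apply: eq_bigr => v _.
by case: eqP => _; rewrite ?mul1r ?mul0r.
Qed.

Lemma eval_mul p r q : eval (qw_mul actQ Wl p r) q = eval p (eval r q).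
Proof.
rewrite /eval /qw_mul.
under eq_bigr => c _ do rewrite big_distrl /=.
rewrite exchange_big /=; apply: eq_big_seq => a aW.
rewrite act_sum // big_distrr /=.
under eq_bigr => c _ do rewrite big_distrl big_mkcond /=.
rewrite exchange_big /=; apply: eq_big_seq => b bW.
rewrite -big_mkcond sum_pred1'; last exact: mul_in.
by rewrite act_comp // actM // mulrA.
Qed.

Lemma eval_delta q : eval (qw_delta Q 1%:M) q = q.
Proof.
by rewrite /eval /qw_delta sum_delta ?act_id //; exact: one_in.
Qed.

Lemma eval_Y a q : a \in Phi -> eval (qw_Y xq a) q = Yop actQ xq a q.
Proof.
move=> aP; rewrite /eval /qw_Y /Yop.
under eq_bigr do rewrite mulrDl.
rewrite big_split; congr (_ + _).
  under eq_bigr do rewrite -mulrA.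
  rewrite sum_delta; first by rewrite mulrC; congr (_ * _); exact: act_id.
  exact: one_in.
under eq_bigr do rewrite -mulrA.
rewrite sum_delta; first by rewrite mulrC.
exact: refl_in.
Qed.

Lemma YI_eval s q : {subset s <= Phi} -> YI actQ xq s q = eval (qw_YI actQ xq Wl s) q.
Proof.
elim: s => [|a s IH] sP /=; first by rewrite eval_delta.
rewrite eval_mul -IH ?eval_Y ?sP ?mem_head //.
by move=> b bs; apply: sP; rewrite inE bs orbT.
Qed.


Lemma sum_neq0 (T : eqType) (r : seq T) (P : pred T) (F : T -> Q) :
  \sum_(i <- r | P i) F i != 0 -> exists2 i, i \in r & P i && (F i != 0).
Proof.
move=> H; case: (boolP (has (fun i => P i && (F i != 0)) r)) => [/hasP[i ir Hi]|/hasPn Hn].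
  by exists i.
move: H; rewrite big1_seq ?eqxx // => i /andP[Pi' ir].
by have := Hn i ir; rewrite Pi' /= negbK => /eqP.
Qed.

Lemma sum_only (F : 'M[R]_m -> Q) c : c \in Wl ->
  (forall v, v \in Wl -> v != c -> F v = 0) -> \sum_(v <- Wl) F v = F c.
Proof.
move=> cW H; rewrite -(sum_pred1 F cW) [RHS]big_mkcond; apply: eq_big_seq => v vW.
by case: eqP => // /eqP /(H v vW).
Qed.

Lemma YI_support s c : {subset s <= Pi} -> qw_YI actQ xq Wl s c != 0 ->
  c = wprod s \/ exists t, [/\ {subset t <= Pi}, (size t < size s)%N & wprod t = c].
Proof.
elim: s c => [|a s IH] c sP /=.
  rewrite /qw_delta /=; case: (c == 1%:M) / eqP => [-> _|_]; first by left.
  by rewrite /= eqxx.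
have sP' : {subset s <= Pi} by move=> b bs; apply: sP; rewrite inE bs orbT.
have aP : a \in Pi by apply: sP; exact: mem_head.
rewrite /qw_mul => /sum_neq0[a' a'W /andP[_ /sum_neq0[b bW /andP[/eqP Hc Hne]]]].
have Hy : qw_Y xq a a' != 0 by apply: contra Hne => /eqP ->; rewrite mul0r.
have Hp : qw_YI actQ xq Wl s b != 0.
  by apply: contra Hne => /eqP ->; rewrite act0 // mulr0.
move: Hy; rewrite /qw_Y; case: (eqVneq a' 1%:M) => [Ea|Na].
  move=> _; subst c; rewrite Ea mul1mx.
  case: (IH b sP' Hp) => [->|[t [tP tl <-]]]; right.
    by exists s; split => //.
  by exists t; split => //; apply: ltnW.
case: (eqVneq a' (refl a)) => [Ea|Nb]; last first.
  by rewrite /= mul0r add0r mul0r eqxx.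
move=> _; subst c; rewrite Ea.
case: (IH b sP' Hp) => [->|[t [tP tl <-]]]; first by left.
right; exists (a :: t); split => //.
by move=> v; rewrite inE => /orP[/eqP ->|/tP].
Qed.


Lemma YI_diag s : {subset s <= Pi} ->
  (forall t, {subset t <= Pi} -> wprod t = wprod s -> (size s <= size t)%N) ->
  qw_YI actQ xq Wl s (wprod s) \is a GRing.unit.
Proof.
elim: s => [|a s IH] sP Hred /=.
  by rewrite /qw_delta /= eqxx unitr1.
have sP' : {subset s <= Pi} by move=> b bs; apply: sP; rewrite inE bs orbT.
have aP : a \in Pi by apply: sP; exact: mem_head.
have aPhi : a \in Phi by exact: HPi.
have a0 : a != 0 by apply: contraNneq H0 => <-.
have sPhi : {subset s <= Phi} by move=> b /sP'/HPi.
have wsW : wprod s \in Wl by exact: wprod_in.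
have raW : refl a \in Wl by exact: refl_in.
have ra1 : refl a != 1%:M.
  apply/eqP => E; have := Hred s sP'; rewrite /= E mul1mx => /(_ erefl).
  by rewrite ltnn.
have Hred' : forall t, {subset t <= Pi} -> wprod t = wprod s -> (size s <= size t)%N.
  move=> t tP Et; have := Hred (a :: t); rewrite /= Et ltnS; apply => //.
  by move=> v; rewrite inE => /orP[/eqP ->|/tP].
rewrite /qw_mul (sum_only raW).
  rewrite big_mkcond (sum_only wsW).
    rewrite eqxx /qw_Y /= (negPf ra1) eqxx /= mul0r add0r mul1r.
    by rewrite unitrM unitrV Hx // act_unit // IH.
  move=> b bW Nb; case: eqP => // /(congr1 (mulmx (refl a))).
  by rewrite !mulmxA reflK // !mul1mx => Eb; rewrite Eb eqxx in Nb.
move=> a' a'W Na; rewrite big1_seq // => b /andP[/eqP Eb bW].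
rewrite /qw_Y; case: (eqVneq a' 1%:M) => [Ea|Na1]; last first.
  by rewrite (negPf Na) /= !mul0r add0r mul0r.
have Hp : qw_YI actQ xq Wl s b = 0.
  apply/eqP; apply: contraT => Hb.
  have Ebw : b = refl a *m wprod s by rewrite -Eb Ea mul1mx.
  case: (YI_support sP' Hb) => [E|[t [tP tl Et]]].
    have := Hred s sP'; rewrite /= -Ebw E => /(_ erefl); by rewrite ltnn.
  have := Hred t tP; rewrite /= Et -Ebw => /(_ erefl).
  by move=> H; move: (leq_trans H (ltnW tl)); rewrite ltnn.
by rewrite Hp act0 // mulr0.
Qed.


Local Notation n := (size Wl).
Local Notation B := (Bmx actQ xq Wl I).
Definition L (k : 'I_n) := size (I (Wl`_k)).

Lemma eqW (k k' : 'I_n) : (Wl`_k == Wl`_k') = (k == k').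
Proof. by rewrite nth_uniq. Qed.

Lemma nthW (k : 'I_n) : Wl`_k \in Wl.
Proof. exact: mem_nth. Qed.

Lemma B_tri i k : B i k != 0 -> k = i \/ (L k < L i)%N.
Proof.
rewrite mxE => H.
have [IP Iw Imin] := HI (nthW i).
case: (YI_support IP H) => [E|[t [tP tl Et]]].
  by left; apply/eqP; rewrite -eqW E Iw.
right; have [_ _ Kmin] := HI (nthW k).
exact: leq_ltn_trans (Kmin t tP Et) tl.
Qed.

Lemma B_diag i : B i i \is a GRing.unit.
Proof.
rewrite mxE; have [IP Iw Imin] := HI (nthW i).
have := YI_diag IP; rewrite Iw; apply => t tP Et; exact: Imin.
Qed.

Lemma det_B : \det B = \prod_i B i i.
Proof.
rewrite /determinant (bigD1 (1 : 'S_n)%g) //= odd_perm1 expr0 mul1r.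
rewrite [X in _ + X = _]big1.
  by rewrite addr0; apply: eq_bigr => i _; rewrite perm1.
move=> s Ns.
case: (boolP [exists i, B i (s i) == 0]) => [/existsP[i /eqP Hi]|].
  by rewrite (bigD1 i) //= Hi mul0r mulr0.
rewrite negb_exists => /forallP Hall; exfalso.
have Hle : forall i, (L (s i) <= L i)%N.
  by move=> i; case: (B_tri (Hall i)) => [->|/ltnW].
have [j Hj] : exists j, s j != j.
  apply/existsP; apply: contraT => /existsPn Hn; apply: contraNT Ns => _.
  apply/eqP/permP => i; rewrite perm1; exact/eqP/negPn/Hn.
have Hlt : (L (s j) < L j)%N by case: (B_tri (Hall j)) => [E|//]; rewrite E eqxx in Hj.
have Hsum : (\sum_i L (s i) < \sum_i L i)%N.
  rewrite (bigD1 j) //= [X in (_ < X)%N](bigD1 j) //=.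
  rewrite -addSn; apply: leq_add => //; apply: leq_sum => i _; exact: Hle.
by move: Hsum; rewrite [X in (_ < X)%N](reindex_inj (@perm_inj _ s)) ltnn.
Qed.

Lemma B_unit : B \in unitmx.
Proof. by rewrite unitmxE det_B; apply: unitr_prod => i _; exact: B_diag. Qed.

Lemma sumW (G : 'M[R]_m -> Q) : \sum_(w <- Wl) G w = \sum_(i < n) G (Wl`_i).
Proof. by rewrite (big_nth 0) big_mkord. Qed.

Lemma zeta_nth (i k : 'I_n) : zeta actQ xq Wl I (Wl`_i) (Wl`_k) = invmx B k i.
Proof.
rewrite /zeta.
under eq_bigr => i' _ do under eq_bigl => k' do rewrite !eqW.
rewrite (bigD1 i) //= [X in _ + X = _]big1.
  by rewrite addr0; under eq_bigl => k' do rewrite eqxx andbT; rewrite big_pred1_eq.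
move=> i' /negPf Ni; rewrite big1 // => k' /andP[_]; by rewrite Ni.
Qed.

Lemma key y q : y \in Wl ->
  actQ y q = \sum_(w <- Wl) YI actQ xq (I w) q * zeta actQ xq Wl I w y.
Proof.
move=> yW.
have k0lt : (index y Wl < n)%N by rewrite index_mem.
pose k0 : 'I_n := Ordinal k0lt.
have Ey : y = Wl`_k0 by rewrite /= nth_index.
rewrite sumW Ey.
have E : forall i : 'I_n, YI actQ xq (I Wl`_i) q * zeta actQ xq Wl I Wl`_i Wl`_k0
    = (\sum_(k < n) B i k * actQ Wl`_k q) * invmx B k0 i.
  move=> i; rewrite zeta_nth YI_eval; last first.
    by have [IP _ _] := HI (nthW i); move=> b /IP/HPi.
  rewrite /eval sumW; congr (_ * _); apply: eq_bigr => k _; by rewrite mxE.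
under eq_bigr => i _ do rewrite E big_distrl /=.
rewrite exchange_big /=.
have E1 : forall k : 'I_n, \sum_(i < n) B i k * actQ Wl`_k q * invmx B k0 i
   = (invmx B *m B) k0 k * actQ Wl`_k q.
  move=> k; rewrite mxE big_distrl /=; apply: eq_bigr => i _; ring.
under eq_bigr => k _ do rewrite E1.
rewrite mulVmx ?B_unit //.
rewrite (bigD1 k0) //= [X in _ = _ + X]big1.
  by rewrite mxE eqxx mulr1n mul1r addr0.
by move=> k Nk; rewrite mxE eq_sym (negPf Nk) mulr0n mul0r.
Qed.

Lemma main_sec (xP f g : Q) u v : u \in Wl -> v \in Wl ->
    pi_act actQ Wl xP (zmul (cZ actQ f) (cZ actQ g)) v
  = \sum_(w <- Wl) \sum_(w' <- Wl)
      (YI actQ xq (I w) f * actQ u (YI actQ xq (I w') g)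
       * pi_act actQ Wl xP (zmul (zeta actQ xq Wl I w)
                 (odot actQ u (zeta actQ xq Wl I w'))) v).
Proof.
move=> uW vW; rewrite /pi_act; symmetry.
under eq_bigr => w _.
  under eq_bigr => w' _ do rewrite big_distrr.
  rewrite exchange_big.
  over.
rewrite exchange_big /=; symmetry; apply: eq_big_seq => w'' w''W.
have yW : v *m w'' \in Wl by exact: mul_in.
have [uU uiW] := inv_in uW.
rewrite /zmul /cZ /odot.
rewrite [actQ (v *m w'') f](key f yW).
have -> : actQ (v *m w'') g = actQ u (actQ (invmx u *m (v *m w'')) g).
  by rewrite -act_comp ?mulKVmx // mul_in.
rewrite (key g) ?mul_in // act_sum // big_distrl /= big_distrr /=.
apply: eq_bigr => w _; rewrite big_distrr /= big_distrr /=; apply: eq_bigr => w' _.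
rewrite actM //; ring.
Qed.

End Main.

Theorem theorem4p4 (R : realType) (m : nat) (Phi Pi : seq 'cV[R]_m)
  (Wl : seq 'M[R]_m) (I : 'M[R]_m -> seq 'cV[R]_m)
  (S : comPzRingType) (act : 'M[R]_m -> S -> S) (x : 'cV[R]_m -> S)
  (Q : comUnitRingType) (j : {rmorphism S -> Q}) (actQ : 'M[R]_m -> Q -> Q) :
  is_root_system Phi ->
  is_simple_system Phi Pi ->
  enumW Phi Wl ->
  (forall w, w \in Wl -> reduced_word Pi (I w) w) ->
  is_W_action Wl act ->
  (forall w a, w \in Wl -> a \in Phi -> act w (x a) = x (w *m a)) ->
  (forall a, a \in Phi -> forall s : S, x a * s = 0 -> s = 0) ->
  (forall a a', pos_root Phi Pi a -> pos_root Phi Pi a' -> a != a' ->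
     forall f : S, (exists h, x a' * f = x a * h) -> exists h, f = x a * h) ->
  injective j ->
  is_W_action Wl actQ ->
  (forall w s, w \in Wl -> j (act w s) = actQ w (j s)) ->
  (forall a, a \in Phi -> j (x a) \is a GRing.unit) ->
  (forall q : Q, exists (s : S) (l : seq 'cV[R]_m),
      {subset l <= Phi} /\ q * j (\prod_(a <- l) x a) = j s) ->
  forall (f g : S) (u : 'M[R]_m), u \in Wl ->
  forall v, v \in Wl ->
    pi_act actQ Wl (xPi (fun a => j (x a)) Phi Pi)
      (zmul (cZ actQ (j f)) (cZ actQ (j g))) v
  = \sum_(w <- Wl) \sum_(w' <- Wl)
      (YI actQ (fun a => j (x a)) (I w) (j f)
       * actQ u (YI actQ (fun a => j (x a)) (I w') (j g))
       * pi_act actQ Wl (xPi (fun a => j (x a)) Phi Pi)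
           (zmul (zeta actQ (fun a => j (x a)) Wl I w)
                 (odot actQ u (zeta actQ (fun a => j (x a)) Wl I w'))) v).

Proof.
move=> [_ H0 _ _] [HPi _ _] [HWu HW] HI _ _ _ _ _ Hact _ Hx _ f g u uW v vW.
have Hx' : forall a, a \in Phi -> (fun a => j (x a)) a \is a GRing.unit by [].
exact: (main_sec H0 HPi HWu HW HI Hact Hx' _ _ _ uW vW).
Qed.
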